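(* Let $\tau$ be a primitive, aperiodic substitution and let $g_1,g_2$ be generators for $\tau$. Then $g_1^*\sim_r g_2^*$ holds if and only if there exist generators $g_1'\sim_G g_1$ and $g_2'\sim_G g_2$ whose right wings are identical.
   Context: Let $\mathcal{A}$ be a finite nonempty alphabet, $\mathcal{A}^*$ the finite words over $\mathcal{A}$ (including the empty word), $\mathcal{A}^+$ the nonempty words, $|u|$ the length of $u$. A word $u$ is a factor of $v$ if $v=w_1uw_2$ for some words $w_1,w_2$. A substitution is a map $\tau:\mathcal{A}\to\mathcal{A}^+$ extended to a concatenation-respecting map on words and letterwise to sequences. For $x\in\mathcal{A}^{\mathbb{Z}}$, $x_{[i]}$ denotes the letter at index $i$ and $x_{[i,j]}$ the word $x_{[i]}\cdots x_{[j]}$. The language $\mathcal{L}(\tau)$ is the set of words that are factors of $\tau^n(a)$ for some letter $a$ and some $n\ge1$; $X_\tau=\{x\in\mathcal{A}^{\mathbb{Z}}: x_{[i,j]}\in\mathcal{L}(\tau)\ \forall i\le j\}$. $\tau$ is primitive if there is $n\ge1$ such that every letter $b$ is a factor of $\tau^n(a)$ for every letter $a$, and there is a letter $a$ such that for every $N$ there is $n$ with $|\tau^n(a)|>N$; a primitive $\tau$ is aperiodic if $X_\tau$ is infinite. A generator for $\tau$ is a triple $(v,u,w)$ with $v,u,w\in\mathcal{A}^+$, $u\in\mathcal{L}(\tau)$ and $\tau(u)=vuw$; $v$, $u$, $w$ are its left wing, center and right wing, and its length is $|u|$. Its completion $(v,u,w)^*\in X_\tau$ is the two-sided sequence $\cdots\tau^2(v)\tau(v)vu.w\tau(w)\tau^2(w)\cdots$,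 i.e. the left-infinite word $\cdots\tau^2(v)\tau(v)vu$ occupies the negative indices, ending at index $-1$, and the right-infinite word $w\tau(w)\tau^2(w)\cdots$ occupies the indices $\ge0$, starting at index $0$. If $(v,u,cw)$ is a generator with $c\in\mathcal{A}$, $w\in\mathcal{A}^*$, its right extension is the generator $(v,uc,w\tau(c))$; if $(vc,u,w)$ is a generator with $c\in\mathcal{A}$, $v\in\mathcal{A}^*$, its left extension is the generator $(\tau(c)v,cu,w)$. Two generators $g_1,g_2$ are G related ($g_1\sim_G g_2$) if there is a generator $g_3$ obtainable from $g_1$ and also from $g_2$ by finite (possibly empty) sequences of left and right extensions. For $x,y\in X_\tau$, $x\sim_r y$ (right tail equivalence) means there are $m,M\in\mathbb{Z}$ with $x_{[i]}=y_{[i+m]}$ for all $i\ge M$. *)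

(* Defs.v *)
From mathcomp Require Import all_boot all_order all_algebra.
Set Implicit Arguments. Unset Strict Implicit. Unset Printing Implicit Defensive.

Section Subst.
Variable A : finType.
Variable tau : A -> seq A.

Definition subst (s : seq A) : seq A := flatten (map tau s).
Definition substn (n : nat) (s : seq A) : seq A := iter n subst s.

Definition in_lang (u : seq A) : Prop :=
  exists (a : A) (n : nat), 0 < n /\ infix u (substn n [:: a]).

Definition window (x : int -> A) (i j : int) : seq A :=
  mkseq (fun k => x (i + (k%:Z))%R) (absz (j - i)%R).+1.

Definition in_X (x : int -> A) : Prop :=
  forall i j : int, (i <= j)%R -> in_lang (window x i j).

Definition primitive : Prop :=
  (forall a, tau a <> [::]) /\
  (exists n, 0 < n /\ forall a b : A, b \in substn n [:: a]) /\
  (exists a : A, forall N, exists n, N < size (substn n [:: a])).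

(* X_tau infinite *)
Definition aperiodic : Prop :=
  primitive /\ ~ exists (n : nat) (f : 'I_n -> (int -> A)), forall x, in_X x -> exists i, f i = x.

Definition gen_triple := (seq A * seq A * seq A)%type.
Definition lwing (g : gen_triple) := g.1.1.
Definition center (g : gen_triple) := g.1.2.
Definition rwing (g : gen_triple) := g.2.

Definition generator (g : gen_triple) : Prop :=
  let: (v, u, w) := g in
  v <> [::] /\ u <> [::] /\ w <> [::] /\ in_lang u /\ subst u = v ++ u ++ w.

(* right-infinite word w tau(w) tau^2(w) ... : prefix of length >= n+1 *)
Definition right_prefix (w : seq A) (n : nat) : seq A :=
  flatten [seq substn j w | j <- iota 0 n.+1].
(* reversed left-infinite word ... tau(v) v u, read from index -1 leftwards *)
Definition left_prefix (v u : seq A) (n : nat) : seq A :=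
  rev u ++ flatten [seq rev (substn j v) | j <- iota 0 n.+1].

(* completion (v,u,w)^*; a0 is an irrelevant default letter *)
Definition completion (a0 : A) (g : gen_triple) : int -> A :=
  let: (v, u, w) := g in
  fun i => match i with
           | Posz n => nth a0 (right_prefix w n) n
           | Negz n => nth a0 (left_prefix v u n) n  (* index -(n+1) *)
           end.

Definition ext_step (g g' : gen_triple) : Prop :=
  (exists v u c w, g = (v, u, c :: w) /\ g' = (v, rcons u c, w ++ tau c)) \/
  (exists v c u w, g = (rcons v c, u, w) /\ g' = (tau c ++ v, c :: u, w)).

Inductive ext_reach : gen_triple -> gen_triple -> Prop :=
| ext_refl g : ext_reach g g
| ext_trans g g' g'' : ext_step g g' -> ext_reach g' g'' -> ext_reach g g''.

Definition G_related (g1 g2 : gen_triple) : Prop :=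
  generator g1 /\ generator g2 /\
  exists g3, generator g3 /\ ext_reach g1 g3 /\ ext_reach g2 g3.

Definition right_tail_eq (x y : int -> A) : Prop :=
  exists m M : int, forall i : int, (M <= i)%R -> x i = y (i + m)%R.

End Subst.

(* Main.v *)
Require Import Defs.
From mathcomp Require Import all_boot all_order all_algebra.
From mathcomp Require Import zify.
From Stdlib Require Import FunctionalExtensionality.
Import GRing.Theory Num.Theory.
Set Implicit Arguments. Unset Strict Implicit. Unset Printing Implicit Defensive.

Lemma subst_cat (A : finType) (tau : A -> seq A) s t :
  subst tau (s ++ t) = subst tau s ++ subst tau t.
Proof. by rewrite /subst map_cat flatten_cat. Qed.

Lemma subst_flatten (A : finType) (tau : A -> seq A) ss :
  subst tau (flatten ss) = flatten (map (subst tau) ss).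
Proof. by elim: ss => [|s ss IH] //=; rewrite subst_cat IH. Qed.

Lemma substn_cat (A : finType) (tau : A -> seq A) n s t :
  substn tau n (s ++ t) = substn tau n s ++ substn tau n t.
Proof. by elim: n => [|n IH] //=; rewrite /substn /= -!/(substn _ _ _) IH subst_cat. Qed.

Lemma substnS (A : finType) (tau : A -> seq A) n s :
  substn tau n.+1 s = subst tau (substn tau n s).
Proof. by []. Qed.

Lemma substnD (A : finType) (tau : A -> seq A) m n s :
  substn tau (m + n) s = substn tau m (substn tau n s).
Proof. by rewrite /substn iterD. Qed.

Lemma size_subst (A : finType) (tau : A -> seq A) (Hne : forall a, tau a <> [::]) s :
  size s <= size (subst tau s).
Proof.
elim: s => [|c s IH] //=.
rewrite size_cat; have := Hne c; case: (tau c) => [//|b t] _ /=; rewrite addSn ltnS; exact: leq_trans IH (leq_addl _ _).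
Qed.

Lemma size_substn (A : finType) (tau : A -> seq A) (Hne : forall a, tau a <> [::]) n s :
  size s <= size (substn tau n s).
Proof.
elim: n => [|n IH] //; rewrite substnS; exact: leq_trans IH (size_subst Hne _).
Qed.

Lemma subst_infix (A : finType) (tau : A -> seq A) u s :
  infix u s -> infix (subst tau u) (subst tau s).
Proof.
move/infixP=> [s1 [s2 ->]]; rewrite !subst_cat; exact: infix_infix.
Qed.

Lemma substn_infix (A : finType) (tau : A -> seq A) n u s :
  infix u s -> infix (substn tau n u) (substn tau n s).
Proof.
move/infixP=> [s1 [s2 ->]]; rewrite !substn_cat; exact: infix_infix.
Qed.

Lemma mem_substn_infix (A : finType) (tau : A -> seq A) n c s :
  c \in s -> infix (substn tau n [:: c]) (substn tau n s).
Proof.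
move=> /splitPr [s1 s2]. rewrite -[c :: s2]cat1s !substn_cat; exact: infix_infix.
Qed.

Lemma subst_flat_iota (A : finType) (tau : A -> seq A) w k : forall m,
  subst tau (flatten [seq substn tau j w | j <- iota m k]) =
  flatten [seq substn tau j w | j <- iota m.+1 k].
Proof.
elim: k => [|k IH] m //=. by rewrite subst_cat IH.
Qed.

Lemma rp_rec (A : finType) (tau : A -> seq A) w n :
  right_prefix tau w n.+1 = w ++ subst tau (right_prefix tau w n).
Proof. by rewrite /right_prefix subst_flat_iota. Qed.

Lemma rp_add (A : finType) (tau : A -> seq A) w n d :
  exists X, right_prefix tau w (n + d) = right_prefix tau w n ++ X.
Proof.
rewrite /right_prefix -addSn iotaD map_cat flatten_cat; by eexists.
Qed.

Lemma rp_last (A : finType) (tau : A -> seq A) w n :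
  right_prefix tau w n.+1 = right_prefix tau w n ++ substn tau n.+1 w.
Proof.
by rewrite /right_prefix -(addn1 n.+1) iotaD map_cat flatten_cat /= cats0.
Qed.

Lemma rp0 (A : finType) (tau : A -> seq A) w : right_prefix tau w 0 = w.
Proof. by rewrite /right_prefix /= cats0. Qed.

Lemma size_rp (A : finType) (tau : A -> seq A) (Hne : forall a, tau a <> [::]) w n :
  w <> [::] -> n < size (right_prefix tau w n).
Proof.
move=> Hw; have Hs : 0 < size w by case: w Hw.
elim: n => [|n IH]; first by rewrite rp0.
rewrite rp_last size_cat.
have : 0 < size (substn tau n.+1 w) by apply: leq_trans (size_substn Hne _ _).
lia.
Qed.

Definition Rw (A : finType) (tau : A -> seq A) (a0 : A) w (n : nat) :=
  nth a0 (right_prefix tau w n) n.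

Lemma Rw_nth (A : finType) (tau : A -> seq A) (Hne : forall a, tau a <> [::]) a0 w k m :
  w <> [::] -> k < size (right_prefix tau w m) ->
  Rw tau a0 w k = nth a0 (right_prefix tau w m) k.
Proof.
move=> Hw Hk; rewrite /Rw; case: (leqP k m) => Hkm.
  have [X E] := rp_add tau w k (m - k); rewrite subnKC // in E.
  by rewrite E nth_cat size_rp.
have [X E] := rp_add tau w m (k - m); rewrite subnKC ?(ltnW Hkm) // in E.
by rewrite E nth_cat Hk.
Qed.

Lemma Rw_wing (A : finType) (tau : A -> seq A) (Hne : forall a, tau a <> [::]) a0 w k :
  w <> [::] -> k < size w -> Rw tau a0 w k = nth a0 w k.
Proof. move=> Hw Hk; rewrite (@Rw_nth _ _ Hne a0 w k 0 Hw) ?rp0 //. Qed.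

Lemma rp_ext (A : finType) (tau : A -> seq A) c w n :
  right_prefix tau (c :: w) n.+1 =
  c :: right_prefix tau (w ++ tau c) n ++ substn tau n.+1 w.
Proof.
elim: n => [|n IH].
  by rewrite rp_rec !rp0 /= -catA.
have Hc : forall s, subst tau (c :: s) = tau c ++ subst tau s by [].
rewrite rp_rec IH /= Hc.
by rewrite subst_cat (rp_rec _ (w ++ tau c)) -!catA.
Qed.

Lemma Rw_ext (A : finType) (tau : A -> seq A) (Hne : forall a, tau a <> [::]) a0 c w n :
  Rw tau a0 (w ++ tau c) n = Rw tau a0 (c :: w) n.+1.
Proof.
rewrite /Rw rp_ext /= nth_cat size_rp //.
by have := Hne c; case: (tau c) => //; case: w.
Qed.

Lemma ext_reach_Rw (A : finType) (tau : A -> seq A) (Hne : forall a, tau a <> [::]) a0 g h :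
  ext_reach tau g h -> exists k, forall n, Rw tau a0 (rwing h) n = Rw tau a0 (rwing g) (n + k).
Proof.
elim=> [g0|g0 g' g'' Hs _ [k Hk]]; first by exists 0 => n; rewrite addn0.
case: Hs => [[v [u [c [w [E1 E2]]]]]|[v [c [u [w [E1 E2]]]]]]; subst.
  exists k.+1 => n; rewrite Hk /rwing /= Rw_ext // addnS //.
by exists k.
Qed.

Lemma gen_ext1 (A : finType) (tau : A -> seq A) (Hne : forall a, tau a <> [::]) v u c w :
  generator tau (v, u, c :: w) -> generator tau (v, rcons u c, w ++ tau c).
Proof.
move=> [Hv [Hu [_ [[a [n [Hn Hin]]] Hs]]]].
split=> //; split; first by case: (u).
split; first by have := Hne c; case: (tau c) => //; case: (w).
split; last by rewrite -cats1 !subst_cat Hs /= /subst /= cats0 -!catA -cat1s -!catA.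
exists a, n.+1; split => //.
rewrite substnS; apply: infix_trans (subst_infix tau Hin).
by rewrite Hs -cat_rcons; apply/infixP; exists v, w.
Qed.

Lemma gen_extk (A : finType) (tau : A -> seq A) (Hne : forall a, tau a <> [::]) a0 k :
  forall g, generator tau g -> exists g', generator tau g' /\ ext_reach tau g g' /\
    forall n, Rw tau a0 (rwing g') n = Rw tau a0 (rwing g) (n + k).
Proof.
elim: k => [|k IH] g Hg; first by exists g; split => //; split; [exact: ext_refl|move=> n; rewrite addn0].
move: Hg; case: g => [[v u] w]; case: w => [|c w] Hg; first by case: Hg => _ [_ []].
have Hg1 := gen_ext1 Hne Hg.
have [g' [Hg' [Hr HR]]] := IH _ Hg1.
exists g'; split => //; split.
  apply: ext_trans Hr; left; by exists v, u, c, w.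
move=> n; rewrite HR /rwing /= Rw_ext // addnS //.
Qed.

Lemma nth_subst_take (A : finType) (tau : A -> seq A) (Hne : forall a, tau a <> [::]) a0 s m k :
  k < m -> m <= size s -> nth a0 (subst tau s) k = nth a0 (subst tau (take m s)) k.
Proof.
move=> Hk Hm; rewrite -{1}(cat_take_drop m s) subst_cat nth_cat.
have := size_subst Hne (take m s); rewrite size_take_min (minn_idPl Hm) => H.
by rewrite (leq_trans Hk H).
Qed.

Lemma take_mkseq' (T : Type) (f : nat -> T) m L : m <= L -> take m (mkseq f L) = mkseq f m.
Proof. by move=> H; rewrite /mkseq -map_take take_iota (minn_idPl H). Qed.

Lemma rp_mkseq (A : finType) (tau : A -> seq A) (Hne : forall a, tau a <> [::]) a0 w n :
  w <> [::] -> right_prefix tau w n = mkseq (Rw tau a0 w) (size (right_prefix tau w n)).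
Proof.
move=> Hw; apply: (@eq_from_nth _ a0); first by rewrite size_mkseq.
move=> i Hi; by rewrite nth_mkseq // (Rw_nth Hne a0 Hw Hi).
Qed.

Lemma Rw_shift (A : finType) (tau : A -> seq A) (Hne : forall a, tau a <> [::]) a0 w k :
  w <> [::] -> Rw tau a0 w (size w + k) = nth a0 (subst tau (mkseq (Rw tau a0 w) k.+1)) k.
Proof.
move=> Hw.
have Hs := size_rp Hne k Hw.
have Hs2 := size_subst Hne (right_prefix tau w k).
rewrite (Rw_nth Hne a0 (m := k.+1) Hw); last by rewrite rp_rec size_cat; lia.
rewrite rp_rec nth_cat ltnNge leq_addr /= addKn.
rewrite (nth_subst_take Hne a0 (m := k.+1)) //.
by rewrite {1}(rp_mkseq Hne a0 k Hw) take_mkseq'.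
Qed.

Lemma shift_eq (A : finType) (tau : A -> seq A) (Hne : forall a, tau a <> [::]) a0 w1 w2 k :
  w1 <> [::] -> w2 <> [::] -> (forall n, Rw tau a0 w1 n = Rw tau a0 w2 n) ->
  Rw tau a0 w1 (size w1 + k) = Rw tau a0 w1 (size w2 + k).
Proof.
move=> H1 H2 E; rewrite (Rw_shift Hne a0 k H1) E (Rw_shift Hne a0 k H2).
by rewrite (eq_mkseq E).
Qed.

Lemma periodic_mod (A : Type) (R : nat -> A) a p :
  (forall k, R (a + k) = R (a + p + k)) -> forall k, R (a + k) = R (a + k %% p).
Proof.
move=> H k; rewrite {1}(divn_eq k p).
elim: (k %/ p) => [|q IH]; first by rewrite mul0n add0n.
by rewrite mulSn -[p + _ + _]addnA addnA -H IH.
Qed.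

Lemma occur (A : finType) (tau : A -> seq A) a0 w u N :
  primitive tau -> w <> [::] -> in_lang tau u ->
  exists s, N <= s /\ forall k, k < size u -> nth a0 u k = Rw tau a0 w (s + k).
Proof.
move=> [Hne [[N0 [HN0 Hall]] _]] Hw [b [n [_ Hin]]].
have Hsw : 0 < size (substn tau N w).
  apply: leq_trans (size_substn Hne _ _); by case: (w) Hw.
pose c := nth a0 (substn tau N w) 0.
have Hc : c \in substn tau N w by apply: mem_nth.
have H1 : infix u (substn tau (n + N0 + N) w).
  have H2 : infix (substn tau n [:: b]) (substn tau n (substn tau N0 [:: c])).
    exact: (mem_substn_infix tau n (Hall c b)).
  have H3 : infix (substn tau (n + N0) [:: c]) (substn tau (n + N0 + N) w).
    rewrite (substnD _ (n + N0) N); exact: mem_substn_infix.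
  rewrite substnD in H3.
  exact: (infix_trans Hin (infix_trans H2 H3)).
pose j' := n + N0.-1 + N.
have Ej : n + N0 + N = j'.+1 by rewrite /j'; lia.
have HjN : N <= j'.+1 by rewrite /j'; lia.
clearbody j'; rewrite Ej in H1.
move/infixP: H1 => [y1 [y2 Ey]].
have Hsz := size_rp Hne j' Hw.
exists (size (right_prefix tau w j') + size y1); split; first by lia.
move=> k Hk.
have Hlt : size (right_prefix tau w j') + size y1 + k < size (right_prefix tau w j'.+1).
  by rewrite rp_last Ey; move: (right_prefix tau w j') => P; rewrite !size_cat -addnA ltn_add2l ltn_add2l ltn_addr.
rewrite (Rw_nth Hne a0 Hw Hlt) rp_last Ey nth_cat ltnNge -addnA leq_addr /= addKn.
by rewrite nth_cat ltnNge leq_addr /= addKn nth_cat Hk.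
Qed.

Lemma no_periodic (A : finType) (tau : A -> seq A) a0 w a p :
  primitive tau -> aperiodic tau -> w <> [::] -> 0 < p ->
  (forall k, Rw tau a0 w (a + k) = Rw tau a0 w (a + p + k)) -> False.
Proof.
move=> Hp [_ Hap] Hw Hp0 Hper.
pose R := Rw tau a0 w.
have Hmod := periodic_mod Hper.
pose Q := fun z : int => R (a + `|(z %% Posz p)%Z|%N).
have HQnat : forall m, Q (Posz m) = R (a + m).
  by move=> m; rewrite /Q modz_nat absz_nat [RHS]Hmod.
have HQmod : forall d z, Q (d + z)%R = Q (d + (z %% Posz p)%Z)%R.
  by move=> d z; rewrite /Q modzDmr.
have Hz : forall z : int, Posz `|(z %% Posz p)%Z|%N = (z %% Posz p)%Z /\ (`|(z %% Posz p)%Z| < p)%N.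
  move=> z; have := modz_ge0 z (d:= Posz p); have := ltz_pmod z (d := Posz p); lia.
apply: Hap; exists p.
pose f := fun r : 'I_p => fun i : int => Q (i + Posz r)%R.
exists f => x Hx.
have C : forall n : nat, exists e : int, forall i : int,
    (- Posz n <= i)%R -> (i <= Posz n)%R -> x i = Q (e + i)%R.
  move=> n.
  have Hl := Hx (- Posz n)%R (Posz n) ltac:(lia).
  have [s [Hs Hocc]] := occur a0 a Hp Hw Hl.
  exists (Posz (s - a) + Posz n)%R => i Hi1 Hi2.
  have Hk : (`|(i + Posz n)%R| < size (window x (- Posz n)%R (Posz n)))%N.
    rewrite size_mkseq; lia.
  have := Hocc _ Hk; rewrite nth_mkseq; last by rewrite size_mkseq in Hk.
  rewrite (_ : (- Posz n + Posz `|(i + Posz n)%R|%N)%R = i); last by lia.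
  move=> ->.
  rewrite (_ : (Posz (s - a) + Posz n + i)%R = Posz (s - a + `|(i + Posz n)%R|%N)); last by lia.
  by rewrite HQnat /R (_ : a + (s - a + _) = s + `|(i + Posz n)%R|%N) //; lia.
have [ep Hep] := C p.
have Hall : forall n, p <= n -> exists e, (forall i : int, (- Posz n <= i)%R -> (i <= Posz n)%R -> x i = Q (e + i)%R) /\
   forall z, Q (e + z)%R = Q (ep + z)%R.
  move=> n Hn; have [e He] := C n; exists e; split => // z.
  rewrite HQmod [RHS]HQmod; have [<- Hlt] := Hz z.
  move: (`|(z %% Posz p)%Z|%N) Hlt => j Hj.
  by rewrite -He ?Hep //; lia.
have Hxi : forall i, x i = Q (ep + i)%R.
  move=> i; have [e [He1 He2]] := Hall (maxn p `|i|%N) (leq_maxl _ _).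
  rewrite -He2 He1 //; lia.
have [Er Hr] := Hz ep.
exists (Ordinal Hr); apply: functional_extensionality => i.
by rewrite Hxi /f /= (addrC ep) [in RHS]HQmod -Er.
Qed.

Lemma wing_eq (A : finType) (tau : A -> seq A) (a0 : A) w1 w2 :
  primitive tau -> aperiodic tau -> w1 <> [::] -> w2 <> [::] ->
  (forall n, Rw tau a0 w1 n = Rw tau a0 w2 n) -> w1 = w2.
Proof.
move=> Hp Hap.
have Hne := Hp.1.
have Hlt : forall w1 w2, w1 <> [::] -> w2 <> [::] ->
    (forall n, Rw tau a0 w1 n = Rw tau a0 w2 n) -> size w1 < size w2 -> False.
  move=> v1 v2 H1 H2 E Hs.
  apply: (no_periodic (a0 := a0) (a := size v1) (p := size v2 - size v1) Hp Hap H1); first by rewrite subn_gt0.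
  by move=> k; rewrite (shift_eq Hne k H1 H2 E) subnKC // ltnW.
move=> H1 H2 E.
case: (ltngtP (size w1) (size w2)) => Hs.
- by case: (Hlt _ _ H1 H2 E Hs).
- by case: (Hlt _ _ H2 H1 (fun n => esym (E n)) Hs).
apply: (@eq_from_nth _ a0) => // i Hi.
rewrite -(Rw_wing Hne a0 H1 Hi) E Rw_wing //; by rewrite -Hs.
Qed.

Lemma compl_pos (A : finType) (tau : A -> seq A) a0 v u w n :
  completion tau a0 (v, u, w) (Posz n) = Rw tau a0 w n.
Proof. by []. Qed.

Theorem mainTheorem6 (A : finType) (a0 : A) (tau : A -> seq A)
  (g1 g2 : gen_triple A) :
  primitive tau -> aperiodic tau ->
  generator tau g1 -> generator tau g2 ->
  (right_tail_eq (completion tau a0 g1) (completion tau a0 g2) <->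
   exists g1' g2' : gen_triple A,
     G_related tau g1' g1 /\ G_related tau g2' g2 /\ rwing g1' = rwing g2').
Proof.
move=> Hp Hap Hg1 Hg2; have Hne := Hp.1.
move: Hg1 Hg2; case: g1 => [[v1 u1] w1]; case: g2 => [[v2 u2] w2] Hg1 Hg2.
split.
- move=> [m [M H]].
  pose t1 := (`|M| + `|m|)%N; pose t2 := `|(Posz t1 + m)%R|%N.
  have E : forall n, Rw tau a0 w1 (n + t1) = Rw tau a0 w2 (n + t2).
    move=> n; have := H (Posz (n + t1)).
    rewrite (_ : (Posz (n + t1) + m)%R = Posz (n + t2)); last by rewrite /t2 /t1; lia.
    rewrite !compl_pos => ->//. rewrite /t1; lia.
  have [g1' [Hg1' [Hr1 HR1]]] := gen_extk Hne a0 t1 Hg1.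
  have [g2' [Hg2' [Hr2 HR2]]] := gen_extk Hne a0 t2 Hg2.
  exists g1', g2'; split; [|split].
  + split=> //; split=> //; exists g1'; split=> //; split=> //; exact: ext_refl.
  + split=> //; split=> //; exists g2'; split=> //; split=> //; exact: ext_refl.
  + apply: (wing_eq Hp Hap (a0 := a0)).
    * by move: Hg1'; case: g1' {HR1 Hr1} => [[? ?] ?] [_ [_ []]].
    * by move: Hg2'; case: g2' {HR2 Hr2} => [[? ?] ?] [_ [_ []]].
    * by move=> n; rewrite HR1 HR2 /rwing /= E.
- move=> [g1' [g2' [[_ [_ [g3 [_ [R13 R3]]]]] [[_ [_ [g4 [_ [R24 R4]]]]] Hw]]]].
  have [k1 H1] := ext_reach_Rw Hne a0 R13.
  have [k2 H2] := ext_reach_Rw Hne a0 R3.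
  have [k3 H3] := ext_reach_Rw Hne a0 R24.
  have [k4 H4] := ext_reach_Rw Hne a0 R4.
  exists (Posz k1 + Posz k4 - Posz k2 - Posz k3)%R, (Posz (k1 + k2 + k3)) => i Hi.
  case: i Hi => [t|t] Hi; last by lia.
  rewrite (_ : (Posz t + _)%R = Posz (t - k2 + k1 - k3 + k4)); last by lia.
  rewrite !compl_pos.
  rewrite /rwing /= in H1 H2 H3 H4 Hw.
  rewrite {1}(_ : t = t - k2 + k2); last by lia.
  rewrite -H2 H1 Hw.
  rewrite (_ : t - k2 + k1 = t - k2 + k1 - k3 + k3); last by lia.
  by rewrite -H3 H4 addnK.
Qed.
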